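(* There is an absolute constant $C$ such that the following holds. Let $A\neq 1$ be a finite group, set $k=k(A)$, let $P\leq S_r$ be a regular permutation group of degree $r$, and let $G=A\wr P$. Then \[ \left|k(G)-\frac{k^r}{r}\right|\leq C\, r\, k^{r/2}. \]
   Context: $k(X)$ denotes the number of conjugacy classes of a finite group $X$. $A\wr P=A^r\rtimes P$ with $P$ permuting the $r$ factors. *)

(* Defs.v *)
From HB Require Import structures.
From mathcomp Require Import all_boot all_order all_algebra all_fingroup.
From mathcomp Require Import all_field.

Set Implicit Arguments.
Unset Strict Implicit.
Unset Printing Implicit Defensive.

Import GRing.Theory Num.Theory.
Local Open Scope group_scope.

Definition kcl (gT : finGroupType) (G : {set gT}) : nat := #|classes G|.

Definition regular_perm (r : nat) (P : {set {perm 'I_r}}) : bool :=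
  [transitive P, on [set: 'I_r] | 'P] && [forall i : 'I_r, 'C_P[i | 'P] == 1].

Section Wreath.
Variables (A : finGroupType) (r : nat).

Definition wbase : finGroupType := {dffun forall i : 'I_r, A}.

Definition wact (f : wbase) (s : {perm 'I_r}) : wbase := [ffun i => f (s^-1 i)].

Lemma wact1 : wact^~ 1 =1 id.
Proof. by move=> f; apply/ffunP => i; rewrite ffunE invg1 perm1. Qed.

Lemma wactM f : act_morph wact f.
Proof.
by move=> s t; apply/ffunP => i; rewrite !ffunE invMg permM.
Qed.

Definition wact_action := TotalAction wact1 wactM.

Lemma wact_is_groupAction : is_groupAction [set: wbase] wact_action.
Proof.
move=> s _; rewrite inE; apply/andP; split.
  by apply/subsetP => x; rewrite inE.
apply/morphicP => x y _ _; rewrite !actpermE /=.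
by apply/ffunP => i; rewrite !ffunE.
Qed.

Definition wact_gaction := GroupAction wact_is_groupAction.

Definition wreath (P : {group {perm 'I_r}}) : finGroupType :=
  sdprod_by (ract_groupAction wact_gaction (subsetT P)).

End Wreath.

(* Main.v *)
Require Import Defs.
From HB Require Import structures.
From mathcomp Require Import all_boot all_order all_algebra all_fingroup.
From mathcomp Require Import all_field.
From mathcomp Require Import ring zify.
Import Order.TTheory GRing.Theory Num.Theory.
Set Implicit Arguments.
Unset Strict Implicit.

Section Helpers.
Local Open Scope group_scope.
Lemma porbits_fpf (T : finType) (s : {perm T}) :
  (forall x, s x != x) -> (2 * #|porbits s| <= #|T|)%N.
Proof.
move=> fpf.
have hpart : partition (porbits s) [set: T].
  have -> : porbits s = [set orbit 'P <[s]> x | x in [set: T]].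
    by apply/setP=> O; apply/imsetP/imsetP => -[x _ ->]; exists x; rewrite ?inE ?porbitE.
  apply: orbit_partition.
  by apply/subsetP => y _; rewrite !inE; apply/subsetP => z; rewrite !inE.
rewrite -cardsT (card_partition hpart) mulnC -sum_nat_const.
apply: leq_sum => O /imsetP [x _ ->].
have <- : #|[set x; s x]| = 2.
  by rewrite cards2 eq_sym fpf.
apply: subset_leq_card; apply/subsetP => y; rewrite !inE => /orP [] /eqP ->.
  exact: porbit_id.
by have := mem_porbit s 1 x; rewrite expg1.
Qed.

Lemma inv_iter (T U : finType) (s : {perm T}) (k : {ffun T -> U}) :
  (forall i, k (s i) = k i) -> forall n i, k ((s ^+ n) i) = k i.
Proof.
move=> h; elim=> [|n IH] i; first by rewrite expg0 perm1.
by rewrite expgSr permM h IH.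
Qed.

Lemma inv_count (T U : finType) (s : {perm T}) (R : {set U}) :
  (#|[set k : {ffun T -> U} | [forall i, k i \in R] && [forall i, k (s i) == k i]]|
    <= #|R| ^ #|porbits s|)%N.
Proof.
set S := [set k : {ffun T -> U} | _].
pose phi (k : {ffun T -> U}) : {ffun {set T} -> option U} :=
  [ffun O => if O \in porbits s then omap k [pick x in O] else None].
have hR : #|Some @: R| = #|R| by apply: card_imset; exact: Some_inj.
rewrite -hR -(card_pffun_on None) -(card_in_imset (f := phi)); last first.
  move=> k1 k2; rewrite !inE => /andP [_ /forallP h1] /andP [_ /forallP h2] e.
  apply/ffunP => i.
  have := congr1 (fun F : {ffun {set T} -> option U} => F (porbit s i)) e; rewrite /phi !ffunE.
  have -> : porbit s i \in porbits s by apply: imset_f.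
  case: pickP => [x hx|]; last by move/(_ i); rewrite porbit_id.
  move=> [] ex; move: hx; move=> /porbitP [n hn]; rewrite hn in ex.
  have e1 : forall i, k1 (s i) = k1 i by move=> j; apply/eqP.
  have e2 : forall i, k2 (s i) = k2 i by move=> j; apply/eqP.
  by rewrite -(inv_iter e1 n) ex (inv_iter e2).
apply: subset_leq_card; apply/subsetP => F /imsetP [k]; rewrite inE => /andP [/forallP hk _] ->.
apply/pffun_onP; split.
  apply/subsetP => O; rewrite inE ffunE; by case: (O \in porbits s); rewrite ?eqxx.
move=> o /mapP [O]; rewrite mem_enum => hO ->; rewrite ffunE hO.
case/imsetP: hO => i _ ->.
case: pickP => [x hx|]; last by move/(_ i); rewrite porbit_id.
by rewrite /= imset_f.
Qed.

Lemma prod_bool (I : finType) (b : I -> bool) :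
  (\prod_i (b i : nat) = [forall i, b i])%N.
Proof.
case: (boolP [forall i, b i]) => [/forallP h|/forallPn [i hi]].
  by rewrite big1 // => i _; rewrite h.
by rewrite (bigD1 i) //= (negbTE hi) mul0n.
Qed.

Lemma sum_bool (I : finType) (P : pred I) (b : I -> bool) :
  (\sum_(i | P i) (b i : nat) = #|[set i | P i && b i]|)%N.
Proof.
rewrite -sum1_card big_mkcond [RHS]big_mkcond /=; apply: eq_bigr => i _.
by rewrite inE; case: (P i); case: (b i).
Qed.

Lemma card_forall (I J : finType) (P : I -> J -> bool) :
  (\sum_(g : {ffun I -> J}) [forall i, P i (g i)] = \prod_i #|[set j | P i j]|)%N.
Proof.
transitivity (\prod_i \sum_j (P i j : nat))%N; last first.
  by apply: eq_bigr => i _; rewrite sum_bool; apply: eq_card => j; rewrite !inE.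
rewrite bigA_distr_bigA /=; apply: eq_bigr => g _; by rewrite prod_bool.
Qed.
Lemma sum_cent (gT : finGroupType) :
  (\sum_(x : gT) #|'C[x]| = #|classes [set: gT]| * #|gT|)%N.
Proof.
have := @Frobenius_Cauchy _ _ _ 'J [set: gT]%G [set: gT].
rewrite cardsT.
move=> H; rewrite -H; last first.
  by apply/subsetP => x _; rewrite !inE; apply/subsetP => y; rewrite !inE.
  apply: eq_big => [x|x _]; first by rewrite inE.
  apply: eq_card => y; apply/idP/idP => [/cent1P h|]. rewrite inE /= in_setT; apply/afix1P; exact/conjg_fixP/commgP. rewrite inE /= in_setT => /afix1P h; exact/cent1P/commgP/conjg_fixP.
Qed.
Lemma class_cent (gT : finGroupType) (x : gT) :
  (#|x ^: [set: gT]| * #|'C[x]| = #|gT|)%N.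
Proof.
have := card_orbit_stab 'J [set: gT]%G x.
by rewrite orbitJ astab1J setTI cardsT.
Qed.

Lemma sum_class (gT : finGroupType) (K : {set gT}) : K \in classes [set: gT] ->
  (\sum_(x in K) #|'C[x]| = #|gT|)%N.
Proof.
case/imsetP => y _ ->.
have hK : (0 < #|y ^: [set: gT]|)%N by apply/card_gt0P; exists y; exact: class_refl.
apply/eqP; rewrite -(eqn_pmul2l hK); apply/eqP.
rewrite big_distrr /= -sum_nat_const; apply: eq_bigr => i hi.
by move/class_eqP: hi => <-; rewrite class_cent.
Qed.

Lemma card_S (gT : finGroupType) (y z : gT) :
  (#|[set x | (y * x == x * z)%g]| <= (y ^: [set: gT] == z ^: [set: gT]) * #|'C[z]|)%N.
Proof.
case: (set_0Vmem [set x | y * x == x * z]) => [->|[x0]]; first by rewrite cards0.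
rewrite inE => /eqP h0.
have ez : y ^ x0 = z by apply: (mulgI x0); rewrite -conjgC.
have -> : y ^: [set: gT] == z ^: [set: gT] by rewrite -ez classGidl ?inE.
rewrite mul1n -(card_lcoset _ x0^-1); apply: subset_leq_card; apply/subsetP => w.
case/lcosetP => x; rewrite inE => /eqP h ->.
have ex : y ^ x = z by apply: (mulgI x); rewrite -conjgC.
rewrite cent1E; apply/eqP.
have e : z ^ (x0^-1 * x) = z by rewrite -{1}ez -conjgM mulKVg ex.
by apply/esym/commgP/conjg_fixP.
Qed.

Lemma brauer (gT : finGroupType) (I : finType) (sg : {perm I}) :
  (\sum_(f : {ffun I -> gT}) \sum_(g : {ffun I -> gT})
      [forall i, (f (sg i) * g i == g i * f i)%g]
   <= #|gT| ^ #|I| * #|[set k : {ffun I -> {set gT}} |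
         [forall i, k i \in classes [set: gT]] && [forall i, k (sg i) == k i]]|)%N.
Proof.
pose W (f : {ffun I -> gT}) := (\prod_i #|'C[f i]|)%N.
pose p (f : {ffun I -> gT}) : {ffun I -> {set gT}} := [ffun i => f i ^: [set: gT]].
pose Q (k : {ffun I -> {set gT}}) := [forall i, k i \in classes [set: gT]].
apply: (@leq_trans (\sum_f [forall i, p f (sg i) == p f i] * W f)%N).
  apply: leq_sum => f _.
  rewrite (card_forall (fun i x => (f (sg i) * x == x * f i)%g)).
  rewrite /W -prod_bool -big_split /=.
  apply: leq_prod => i _; rewrite !ffunE; exact: card_S.
rewrite (partition_big p Q) /=; last first.
  by move=> f _; apply/forallP => i; rewrite ffunE mem_classes ?inE.
rewrite (_ : #|[set k | _ & _]| = \sum_(k | Q k) ([forall i, k (sg i) == k i] : nat)); last by rewrite sum_bool.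
rewrite big_distrr /=; apply: leq_sum => k Qk.
have -> : (\sum_(f | p f == k) [forall i, p f (sg i) == p f i] * W f
           = [forall i, k (sg i) == k i] * \sum_(f | p f == k) W f)%N.
  by rewrite big_distrr /=; apply: eq_bigr => f /eqP ->.
case: [forall i, _]; rewrite ?mul0n ?muln0 ?mul1n ?muln1 //.
apply: eq_leq.
transitivity (\sum_(f : {ffun I -> gT}) \prod_i ((f i ^: [set: gT] == k i) * #|'C[f i]|))%N.
  rewrite big_mkcond; apply: eq_bigr => f _.
  rewrite big_split /= prod_bool.
  have -> : [forall i, f i ^: [set: gT] == k i] = (p f == k).
    apply/eqfunP/eqP => [h|<- i]; last by rewrite ffunE.
    by apply/ffunP => i; rewrite ffunE h.
  by case: (p f == k); rewrite ?mul0n ?mul1n.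
rewrite -(bigA_distr_bigA (fun i x => (x ^: [set: gT] == k i) * #|'C[x]|)%N) /=.
rewrite -prod_nat_const; apply: eq_bigr => i _.
move/forallP: Qk => /(_ i) Ki.
rewrite -(sum_class Ki) [RHS]big_mkcond; apply: eq_bigr => x _ /=.
case/imsetP: Ki => y _ ->.
case: (boolP (x \in y ^: [set: gT])) => hx.
  by move/class_eqP: (hx) => ->; rewrite eqxx mul1n.
case: eqP => // e; case/negP: hx; rewrite -e; exact: class_refl.
Qed.

Section W.
Variables (A : finGroupType) (r : nat) (P : {group {perm 'I_r}}).
Local Notation G := (wreath A P).
Lemma valM (u v : G) : val (u * v) = (u.1 * v.1, wact u.2 v.1 * v.2).
Proof. by []. Qed.
Lemma valV1 (u : G) : (val u^-1).1 = u.1^-1.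
Proof. by []. Qed.
Lemma mem1 (u : G) : u.1 \in P.
Proof. by case: u => [[s f]] /= /setXP []. Qed.
Definition mk (s : {perm 'I_r}) (f : wbase A r) : G :=
  @insubd _ _ (sdprod_by (ract_groupAction (wact_gaction A r) (subsetT P))) 1 (s, f).
Lemma val_mk s f : s \in P -> val (mk s f) = (s, f).
Proof. by move=> sP; rewrite val_insubd inE sP in_setT. Qed.

Lemma sum_fiber s (sP : s \in P) (F : G -> nat) :
  (\sum_(u : G | u.1 == s) F u = \sum_(f : wbase A r) F (mk s f))%N.
Proof.
rewrite -(big_imset _ (h := mk s) (A := predT)) /=; last first.
  move=> f g _ _ e; have := congr1 val e; rewrite !val_mk // => -[]. done.
apply: eq_bigl => u; apply/eqP/imsetP => [e|[f _ ->]]; last by rewrite val_mk.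
exists u.2 => //; apply: val_inj; rewrite val_mk -?e; [by clear e; case: u => [[]] | exact: mem1].
Qed.

Lemma cm_coord t f g : t \in P ->
  (mk 1 f * mk t g == mk t g * mk 1 f) = [forall i, f (t^-1 i) * g i == g i * f i].
Proof.
move=> tP; rewrite -val_eqE !valM !val_mk ?group1 //= xpair_eqE mulg1 mul1g eqxx /=.
apply/eqP/forallP => [e i|h].
  have := congr1 (fun F : wbase A r => F i) e; rewrite !ffunE /= => ->. 
  by rewrite invg1 perm1.
apply/ffunP => i; rewrite !ffunE invg1 perm1; exact/eqP.
Qed.

Lemma cm_coord1 f g :
  (mk 1 f * mk 1 g == mk 1 g * mk 1 f) = [forall i, f i * g i == g i * f i].
Proof. by rewrite cm_coord ?group1 //; apply: eq_forallb => i; rewrite invg1 perm1. Qed.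

Lemma T_eq : (\sum_(u : G) \sum_(v : G) ((u * v == v * u)%g : nat) = kcl [set: G] * #|G|)%N.
Proof.
rewrite /kcl -sum_cent; apply: eq_bigr => u _.
rewrite sum_bool; apply: eq_card => v; rewrite inE /= cent1E.
by rewrite eq_sym.
Qed.

Lemma cardG : #|G| = (#|P| * #|A| ^ r)%N.
Proof.
rewrite -[#|G|]sum1_card (partition_big (fun u : G => u.1) (mem P)) /=; last by move=> u _; exact: mem1.
rewrite -sum_nat_const; apply: eq_bigr => s sP.
rewrite (eq_bigl (fun u : G => u.1 == s)) ?sum_fiber //.
  by rewrite sum1_card card_ffun card_ord.
Qed.

Lemma NN : (\sum_(u : G | u.1 == 1%g) \sum_(v : G | v.1 == 1%g) ((u * v == v * u)%g : nat)
   = (#|A| * kcl [set: A]) ^ r)%N.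
Proof.
rewrite sum_fiber ?group1 //.
transitivity (\sum_(f : {ffun 'I_r -> A}) \prod_(i : 'I_r) #|'C[f i]|)%N.
  apply: eq_bigr => f _; rewrite sum_fiber ?group1 //.
  under eq_bigr => g _ do rewrite cm_coord1.
  rewrite (card_forall (fun i x => (f i * x == x * f i))).
  by apply: eq_bigr => i _; apply: eq_card => x; rewrite inE /= cent1E eq_sym.
rewrite -(bigA_distr_bigA (fun (i : 'I_r) (x : A) => #|'C[x]|)) /=.
by rewrite prod_nat_const card_ord sum_cent mulnC.
Qed.

Lemma fiber_le (v : G) s :
  (\sum_(u : G | u.1 == s) ((u * v == v * u)%g : nat)
    <= \sum_(u : G | u.1 == 1%g) ((u * v == v * u)%g : nat))%N.
Proof.
rewrite !sum_bool.
case: (set_0Vmem [set u : G | (u.1 == s) && (u * v == v * u)]) => [->|[u0]].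
  by rewrite cards0.
rewrite inE => /andP [/eqP h0 /eqP c0].
rewrite -(card_imset _ (mulIg u0^-1)).
apply: subset_leq_card; apply/subsetP => w /imsetP [u]; rewrite inE => /andP [/eqP h /eqP c] ->.
rewrite inE; apply/andP; split.
  have -> : (u * u0^-1).1 = u.1 * u0.1^-1 by [].
  by rewrite h h0 mulgV.
apply/eqP; apply: commute_sym; apply: commuteM; first exact: commute_sym.
by apply: commuteV; apply: commute_sym.
Qed.

Lemma col_le (v : G) :
  (\sum_(u : G) ((u * v == v * u)%g : nat)
    <= #|P| * \sum_(u : G | u.1 == 1%g) ((u * v == v * u)%g : nat))%N.
Proof.
rewrite (partition_big (fun u : G => u.1) (mem P)) /=; last by move=> u _; exact: mem1.
rewrite -sum_nat_const; apply: leq_sum => s sP.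
exact: fiber_le.
Qed.

Lemma Y_le (hfp : forall t, t \in P -> t != 1 -> forall i, t^-1 i != i) :
  (\sum_(v : G | v.1 != 1%g) \sum_(u : G | u.1 == 1%g) ((u * v == v * u)%g : nat)
    <= #|P| * (#|A| ^ r * kcl [set: A] ^ r./2))%N.
Proof.
rewrite (partition_big (fun v : G => v.1) (fun t => (t \in P) && (t != 1))) /=; last first.
  by move=> v hv; rewrite mem1.
apply: (@leq_trans (\sum_(t in P) (#|A| ^ r * kcl [set: A] ^ r./2)))%N; last by rewrite sum_nat_const.
rewrite [X in (_ <= X)%N]big_mkcond [X in (X <= _)%N]big_mkcond /=.
apply: leq_sum => t _; case: (boolP (t \in P)) => //= tP; case: (boolP (t != 1)) => //= t1.
rewrite (eq_bigl (fun v : G => v.1 == t)); last first.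
  by move=> v; case: eqP => [->|//]; rewrite eq_sym (negbTE t1).
rewrite sum_fiber //.
under eq_bigr => g _ do rewrite sum_fiber ?group1 //.
under eq_bigr => g _ do under eq_bigr => f _ do rewrite cm_coord //.
rewrite exchange_big /=.
refine (leq_trans (brauer A t^-1) _).
rewrite card_ord; apply: leq_mul => //.
apply: leq_trans (inv_count _ _) _.
rewrite /kcl; apply: leq_pexp2l.
  by apply/card_gt0P; exists (1 ^: [set: A]); apply: mem_classes; rewrite inE.
rewrite geq_half_double -mul2n.
by have := porbits_fpf (hfp t tP t1); rewrite card_ord.
Qed.

Lemma T_ge : ((#|A| * kcl [set: A]) ^ r
   <= \sum_(u : G) \sum_(v : G) ((u * v == v * u)%g : nat))%N.
Proof.
rewrite -NN [X in (_ <= X)%N](bigID (fun u : G => u.1 == 1%g)) /=.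
apply: leq_trans (leq_addr _ _) .
apply: leq_sum => u _.
by rewrite [X in (_ <= X)%N](bigID (fun v : G => v.1 == 1%g)) /= leq_addr.
Qed.

Lemma T_le :
  (\sum_(u : G) \sum_(v : G) ((u * v == v * u)%g : nat)
   <= (#|A| * kcl [set: A]) ^ r + 2 * (#|P| *
      \sum_(v : G | v.1 != 1%g) \sum_(u : G | u.1 == 1%g) ((u * v == v * u)%g : nat)))%N.
Proof.
set Y := (\sum_(v : G | v.1 != 1%g) \sum_(u : G | u.1 == 1%g) ((u * v == v * u)%g : nat))%N.
have hX : (\sum_(v : G | v.1 != 1%g) \sum_(u : G) ((u * v == v * u)%g : nat) <= #|P| * Y)%N.
  by rewrite /Y big_distrr /=; apply: leq_sum => v _; exact: col_le.
rewrite -NN (bigID (fun u : G => u.1 == 1%g)) /= mul2n -addnn addnA.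
apply: leq_add.
  apply: leq_trans (_ : _ <= \sum_(u : G | u.1 == 1%g)
     (\sum_(v : G | v.1 == 1%g) ((u * v == v * u)%g : nat)
      + \sum_(v : G | v.1 != 1%g) ((u * v == v * u)%g : nat)))%N _.
    by apply: leq_sum => u _; rewrite (bigID (fun v : G => v.1 == 1%g)).
  rewrite big_split /= leq_add2l.
  apply: leq_trans hX.
  rewrite exchange_big /=; apply: leq_sum => v _.
  by rewrite [X in (_ <= X)%N](bigID (fun u : G => u.1 == 1%g)) /= leq_addr.
apply: leq_trans hX.
apply: eq_leq; apply: eq_bigr => u _; apply: eq_bigr => v _.
by rewrite eq_sym.
Qed.
End W.
Lemma reg_props r (P : {group {perm 'I_r}}) : regular_perm P ->
  [/\ (0 < r)%N, #|P| = r & forall t, t \in P -> t != 1 -> forall i, t^-1 i != i].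
Proof.
case/andP => /imsetP [x _ hx] /forallP hst.
have r0 : (0 < r)%N by apply: leq_ltn_trans (ltn_ord x).
split => //.
  have := card_orbit_stab 'P P x; rewrite -hx (eqP (hst x)) cards1 muln1 cardsT card_ord.
  by [].
move=> t tP t1 i; apply/negP => /eqP e.
have : t^-1 \in 'C_P[i | 'P].   by rewrite inE groupV tP /=; apply/astab1P.
rewrite (eqP (hst i)) inE eq_invg1 => /eqP te.
by rewrite te eqxx in t1.
Qed.
End Helpers.

Local Open Scope ring_scope.

Theorem lemma4p4 :
  exists C : algC, forall (A : finGroupType) (r : nat) (P : {group {perm 'I_r}}),
    (1 < #|A|)%N -> regular_perm P ->
    `| (kcl [set: wreath A P])%:R - ((kcl [set: A])%:R ^+ r) / r%:R |
      <= C * r%:R * sqrtC ((kcl [set: A])%:R ^+ r).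
Proof.
exists 2 => A r P hA reg.
have [r0 cP hfp] := reg_props reg.
have eT := T_eq A P.
have hge := T_ge A P.
have hle := T_le A P.
have hY := Y_le A hfp.
rewrite cardG cP in eT; rewrite cP in hle hY.
set a := #|A| in eT hge hle hY hA.
set k := kcl [set: A] in eT hge hle hY *.
set kG := kcl [set: wreath A P] in eT *.
set M := (k ^ r./2)%N in hY.
have a0 : (0 < a ^ r)%N by rewrite expn_gt0 (ltn_trans _ hA).
have k0 : (0 < k)%N.
  by apply/card_gt0P; exists ((1 ^: [set: A])%g); apply: mem_classes; rewrite inE.
have h1 : (k ^ r <= kG * r)%N.
  rewrite -(leq_pmul2l a0); move: hge; rewrite eT expnMn.
  by have -> : (kG * (r * a ^ r) = a ^ r * (kG * r))%N by ring.
have h2 : (kG * r <= k ^ r + 2 * r * M * r)%N.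
  rewrite -(leq_pmul2l a0); move: hle; rewrite eT expnMn => hle.
  have := leq_trans hle (leq_add (leqnn _) (leq_mul (leqnn 2) (leq_mul (leqnn r) hY))).
  have -> : (kG * (r * a ^ r) = a ^ r * (kG * r))%N by ring.
  by have -> : (a ^ r * k ^ r + 2 * (r * (r * (a ^ r * M))) = a ^ r * (k ^ r + 2 * r * M * r))%N by ring.
have hM : (M ^ 2 <= k ^ r)%N.
  rewrite /M -expnM leq_pexp2l // muln2.
  by rewrite -{2}(odd_double_half r) leq_addl.
have rpos : (0 : algC) < r%:R by rewrite ltr0n.
have -> : (kG%:R : algC) - k%:R ^+ r / r%:R = (kG * r - k ^ r)%N%:R / r%:R.
  rewrite natrB // natrM natrX mulrBl mulfK //; exact: lt0r_neq0.
rewrite ger0_norm; last by rewrite divr_ge0 ?ler0n.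
rewrite ler_pdivrMr //.
apply: (@le_trans _ _ (2%:R * r%:R * M%:R * r%:R)).
  rewrite -!natrM ler_nat; lia.
apply: ler_wpM2r; first exact: ler0n.
apply: ler_wpM2l; first by rewrite -natrM ler0n.
rewrite -(sqrCK (ler0n _ M)) ler_sqrtC ?qualifE /= ?exprn_ge0 ?ler0n //.
by rewrite -!natrX ler_nat.
Qed.
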